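(* Let $n\ge 3$ and $m\ge 2$, let $K_n$ be the complete graph on $n$ vertices and $C_{2m}$ the cycle graph on $2m$ vertices. Then the set of distinct distance eigenvalues (eigenvalues of the distance matrix) of $K_n\otimes C_{2m}$ consists of the numbers $2(n+1)+nm^2$; $2(n-1)+4\cos\left(\frac{2p\pi}{m}\right)$ for $p=1,2,\ldots,m-1$; $2(n-1)+4\cos\left(\frac{(2q-1)\pi}{m}\right)-n\,\mathrm{cosec}^{2}\left(\frac{(2q-1)\pi}{2m}\right)$ for $q=1,2,\ldots,m$; $4\cos\left(\frac{\pi}{m}r\right)-2$ for $r=0,1,\ldots,2m-1$.
   Context: The Kronecker product $G\otimes H$ of simple graphs $G,H$ has vertex set $V(G)\times V(H)$, with $(x,y)$ adjacent to $(u,v)$ if and only if $xu\in E(G)$ and $yv\in E(H)$. The distance matrix of a connected graph has $(u,v)$ entry equal to the length of a shortest $u$–$v$ path. *)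

(* Defs.v *)
From HB Require Import structures.
From mathcomp Require Import all_boot all_order all_algebra.
From mathcomp Require Import all_classical all_reals all_analysis.
Set Implicit Arguments. Unset Strict Implicit. Unset Printing Implicit Defensive.
Import Order.TTheory GRing.Theory Num.Theory.

Definition complete_graph (n : nat) : rel 'I_n := fun i j => i != j.

Definition cycle_graph (k : nat) : rel 'I_k :=
  fun i j => (val j == (val i).+1 %% k) || (val i == (val j).+1 %% k).

Definition kron_graph (T1 T2 : finType) (e1 : rel T1) (e2 : rel T2)
  : rel (T1 * T2)%type :=
  fun u v => e1 u.1 v.1 && e2 u.2 v.2.

Definition walk (T : finType) (e : rel T) (k : nat) (x y : T) : bool :=
  [exists p : k.-tuple T, path e x p && (last x p == y)].

(* graph distance: least k such that a walk of length k from x to y exists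
   (a shortest walk is a shortest path).  For disconnected pairs the value is
   #|T| (irrelevant for connected graphs, where every distance is < #|T|). *)
Definition gdist (T : finType) (e : rel T) (x y : T) : nat :=
  find (fun k => walk e k x y) (iota 0 #|T|).

Definition dist_matrix (R : nzRingType) (T : finType) (e : rel T)
  : 'M[R]_#|T| :=
  \matrix_(i, j) ((gdist e (enum_val i) (enum_val j))%:R)%R.

Arguments complete_graph n : clear implicits.
Arguments cycle_graph k : clear implicits.

(* Main.v *)
Require Import Defs.
From mathcomp Require Import all_boot all_order all_algebra.
From mathcomp Require Import all_classical all_reals all_analysis.
From mathcomp Require Import zify ring lra.
Import Order.TTheory GRing.Theory Num.Theory.
Set Implicit Arguments. Unset Strict Implicit. Unset Printing Implicit Defensive.

Section Walks.
Variables (T : finType) (e : rel T).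

Lemma walk0 x : walk e 0 x x.
Proof. by apply/existsP; exists [tuple]; rewrite /= eqxx. Qed.

Lemma walkS k x y z : e x y -> walk e k y z -> walk e k.+1 x z.
Proof.
move=> exy /existsP[p /andP[pp lp]]; apply/existsP; exists [tuple of y :: p].
by rewrite /= exy pp.
Qed.

Lemma walk0E x y : walk e 0 x y -> x = y.
Proof. by case/existsP => p; rewrite tuple0 /= => /eqP. Qed.

Lemma walkSE k x z : walk e k.+1 x z -> exists2 y, e x y & walk e k y z.
Proof.
case/existsP => p; case/tupleP: p => y p /= /andP[/andP[exy pp] lp].
by exists y => //; apply/existsP; exists p; rewrite pp.
Qed.

Lemma walk_cat k l x y z : walk e k x y -> walk e l y z -> walk e (k + l) x z.
Proof.
elim: k x => [|k IH] x; first by move/walk0E ->.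
by case/walkSE => w exw wk wl; rewrite addSn; apply: walkS exw (IH _ wk wl).
Qed.
End Walks.

Lemma walk_kron (T1 T2 : finType) (e1 : rel T1) (e2 : rel T2) k a b c d :
  walk e1 k a b -> walk e2 k c d -> walk (kron_graph e1 e2) k (a, c) (b, d).
Proof.
elim: k a c => [|k IH] a c.
  by move/walk0E -> => /walk0E ->; apply: walk0.
case/walkSE => a' e1a w1; case/walkSE => c' e2c w2.
by apply: (walkS (y := (a', c'))) (IH _ _ w1 w2); rewrite /kron_graph /= e1a e2c.
Qed.

Lemma find_iota (P : pred nat) k L :
  P k -> (forall l, l < k -> ~~ P l) -> k < L -> find P (iota 0 L) = k.
Proof.
move=> Pk nP kL.
have -> : L = k + (L - k.+1).+1 by lia.
rewrite iotaD find_cat.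
have -> : has P (iota 0 k) = false.
  by apply/negbTE/hasPn => l; rewrite mem_iota add0n => /andP[_ /nP].
by rewrite size_iota /= add0n Pk addn0.
Qed.

Definition cd (N j j' : nat) : nat :=
  let d := (j - j') + (j' - j) in minn d (N - d).

Lemma modS N j : j < N -> j.+1 %% N = if j.+1 == N then 0 else j.+1.
Proof.
move=> jN; case: eqP => [->|ne]; first by rewrite modnn.
by rewrite modn_small //; lia.
Qed.

Lemma modP N j : j < N -> (j + N.-1) %% N = if j == 0 then N.-1 else j.-1.
Proof.
move=> jN; case: eqP => [->|ne]; first by rewrite add0n modn_small //; lia.
have -> : j + N.-1 = j.-1 + N by lia.
by rewrite modnDr modn_small //; lia.
Qed.

Section Cyc.
Variable N : nat.
Hypothesis N2 : 2 <= N.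
Hypothesis Nev : ~~ odd N.

Lemma Nhalf : exists h, N = h + h.
Proof. exists N./2; have := odd_double_half N; rewrite (negbTE Nev) add0n; lia. Qed.

Lemma cyc_step (a b : 'I_N) z : z < N -> cycle_graph N a b ->
  cd N a z <= (cd N b z).+1 /\ (cd N a z + cd N b z) %% 2 = 1.
Proof.
have [h Nh] := Nhalf.
case: a => a aN; case: b => b bN.
move=> zN; rewrite /cycle_graph /=.
case/orP => /eqP; rewrite modS //.
  case: eqP => H ->; rewrite /cd; lia.
case: eqP => H ->; rewrite /cd; lia.
Qed.

Lemma cd_sym j j' : cd N j j' = cd N j' j.
Proof. rewrite /cd; lia. Qed.

Lemma cd0 j j' : j < N -> j' < N -> (cd N j j' == 0) = (j == j').
Proof. move=> *; rewrite /cd; apply/eqP/eqP; lia. Qed.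

Lemma cd_le j j' : j < N -> j' < N -> 2 * cd N j j' <= N.
Proof. move=> *; rewrite /cd; lia. Qed.

Definition succo (j : 'I_N) : 'I_N := Ordinal (@ltn_pmod j.+1 N (ltnW N2)).
Definition predo (j : 'I_N) : 'I_N := Ordinal (@ltn_pmod (j + N.-1) N (ltnW N2)).

Lemma edge_succ j : cycle_graph N j (succo j).
Proof. by rewrite /cycle_graph /= eqxx. Qed.
Lemma edge_succ' j : cycle_graph N (succo j) j.
Proof. by rewrite /cycle_graph /= eqxx orbT. Qed.
Lemma edge_pred j : cycle_graph N j (predo j).
Proof.
rewrite /cycle_graph /= modP //; apply/orP; right; apply/eqP.
have jN := ltn_ord j.
case: eqP => [->|ne]; first by rewrite prednK ?modnn //; lia.
by rewrite prednK ?modn_small //; lia.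
Qed.

Lemma walkC_even t (j : 'I_N) : walk (cycle_graph N) (2 * t) j j.
Proof.
elim: t => [|t IH]; first exact: walk0.
have -> : 2 * t.+1 = (2 * t).+2 by lia.
exact: walkS (edge_succ j) (walkS (edge_succ' j) IH).
Qed.

Lemma iterS_val k (j : 'I_N) : val (iter k succo j) = (j + k) %% N.
Proof.
elim: k => [|k IH] /=; first by rewrite addn0 modn_small.
by rewrite IH -addn1 modnDml addn1 addnS.
Qed.

Lemma walk_iterS k (j : 'I_N) : walk (cycle_graph N) k j (iter k succo j).
Proof.
elim: k j => [|k IH] j; first exact: walk0.
by rewrite iterSr; apply: walkS (edge_succ j) (IH _).
Qed.

Lemma cycle_sym : symmetric (cycle_graph N).
Proof. by move=> a b; rewrite /cycle_graph orbC. Qed.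

Lemma walk_rev k (x y : 'I_N) : walk (cycle_graph N) k x y -> walk (cycle_graph N) k y x.
Proof.
elim: k x => [|k IH] x; first by move/walk0E ->; apply: walk0.
case/walkSE => w exw /IH wk; rewrite -addn1; apply: walk_cat wk _.
by apply: walkS (walk0 _ _); rewrite cycle_sym.
Qed.

Lemma walk_fwd (j j' : 'I_N) c : (j + c) %% N = j' -> walk (cycle_graph N) c j j'.
Proof.
move=> h; have -> : j' = iter c succo j by apply: val_inj; rewrite iterS_val.
exact: walk_iterS.
Qed.

Lemma walkC_le (j j' : 'I_N) : j <= j' -> walk (cycle_graph N) (cd N j j') j j'.
Proof.
move=> jj; have jN := ltn_ord j; have j'N := ltn_ord j'.
rewrite /cd (_ : j - j' = 0); last by apply/eqP; rewrite subn_eq0.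
rewrite add0n /minn; case: ltnP => _.
  by apply: walk_fwd; rewrite subnKC // modn_small.
apply: walk_rev; apply: walk_fwd.
have -> : j' + (N - (j' - j)) = j + N by rewrite addnBA ?subnBA //; lia.
by rewrite modnDr modn_small.
Qed.

Lemma walkC_cd (j j' : 'I_N) : walk (cycle_graph N) (cd N j j') j j'.
Proof.
case: (leqP j j') => h; first exact: walkC_le.
by apply: walk_rev; rewrite cd_sym; apply: walkC_le; apply: ltnW.
Qed.

Lemma walkC t (j j' : 'I_N) : walk (cycle_graph N) (cd N j j' + 2 * t) j j'.
Proof. exact: walk_cat (walkC_cd j j') (walkC_even t j'). Qed.

End Cyc.

Lemma exists_other n (i i' : 'I_n) : 3 <= n -> exists y : 'I_n, (y != i) && (y != i').
Proof.
move=> n3; case: (boolP [exists y, (y != i) && (y != i')]) => [/existsP //|].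
rewrite negb_exists => /forallP H; exfalso.
have : ([set: 'I_n] \subset i |: [set i'])%SET.
  apply/fintype.subsetP => y _; move: (H y); rewrite !inE negb_and !negbK.
  by case/orP => ->; rewrite ?orbT.
move/subset_leq_card; rewrite cardsT card_ord cards2; lia.
Qed.

Lemma walkK n k (i i' : 'I_n) : 3 <= n -> 0 < k -> (i != i') || (1 < k) ->
  walk (complete_graph n) k i i'.
Proof.
move=> n3; elim: k i => [|k IH] i // _.
case: k IH => [|k] IH.
  by rewrite orbF => ne; apply: walkS ne (walk0 _ _).
move=> _; have [y /andP[yi yi']] := exists_other i i' n3.
by apply: (walkS (y := y)); [rewrite /complete_graph eq_sym | apply: IH; rewrite ?yi'].
Qed.

Definition ddist n m (s t : 'I_n * 'I_(2 * m)) : nat :=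
  let d := cd (2 * m) s.2 t.2 in
  if s.1 == t.1 then (if d == 0 then 0 else if d == 1 then 3 else d)
  else (if d == 0 then 2 else d).

Ltac ifs := repeat match goal with
  |- context[if ?a == ?b then _ else _] => case: (a =P b) => ? end.

Section Dist.
Variables n m : nat.
Hypothesis hn : 3 <= n.
Hypothesis hm : 2 <= m.
Local Notation N := (2 * m).
Local Notation G := (kron_graph (complete_graph n) (cycle_graph N)).

Let N2 : 2 <= N. Proof. lia. Qed.
Let Nev : ~~ odd N. Proof. by rewrite oddM. Qed.

Lemma walk_lower k x y : walk G k x y ->
  cd N x.2 y.2 <= k /\ (k + cd N x.2 y.2) %% 2 = 0.
Proof.
elim: k x => [|k IH] x.
  by move/walk0E ->; rewrite /cd; lia.
case/walkSE => w /andP[_ exw] /IH [h1 h2].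
have [s1 s2] := cyc_step N2 Nev (ltn_ord y.2) exw.
lia.
Qed.

Lemma gdist_kron x y : gdist G x y = ddist x y.
Proof.
rewrite /gdist; apply: find_iota.
- case: x y => [i j] [i' j']; rewrite /ddist /=.
  case: (boolP ((i == i') && (cd N j j' == 0))) => [/andP[/eqP <- ]|].
    by rewrite cd0 // => /eqP /val_inj <-; rewrite eqxx eqxx; apply: walk0.
  move=> hne.
  have [t [ht [h0 h1]]] : exists t, (if i == i' then if cd N j j' == 0 then 0
      else if cd N j j' == 1 then 3 else cd N j j'
      else if cd N j j' == 0 then 2 else cd N j j') = cd N j j' + 2 * t /\
      (0 < cd N j j' + 2 * t) /\ ((i != i') || (1 < cd N j j' + 2 * t)).
    move: hne; case: (i =P i') => [_ /=|/eqP ne] hne.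
      case: eqP => [c0|c1]; first by rewrite c0 in hne.
      case: eqP => [->|c2]; first by exists 1.
      by exists 0; lia.
    case: eqP => [->|c1]; first by exists 1.
    by exists 0; lia.
  rewrite ht; apply: walk_kron; first exact: walkK.
  exact: walkC.
- move=> l hl; apply/negP => /[dup] W /walk_lower [h1 h2].
  move: hl; rewrite /ddist.
  case: l W h1 h2 => [|l] W h1 h2.
    move/walk0E: W ->; have -> : cd N y.2 y.2 = 0 by rewrite /cd; lia.
    by rewrite !eqxx.
  case: l W h1 h2 => [|l] W h1 h2.
    case/walkSE: W => w /andP[e1 e2] /walk0E ew; subst w.
    rewrite /complete_graph in e1; rewrite (negbTE e1).
    move: h1 h2; set c := cd _ _ _; ifs; lia.
  move: h1 h2; set c := cd _ _ _; ifs; lia.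
- rewrite card_prod !card_ord /ddist.
  have := cd_le N2 Nev (ltn_ord x.2) (ltn_ord y.2).
  have : 3 * N <= n * N by rewrite leq_mul2r hn orbT.
  set c := cd _ _ _; ifs; lia.
Qed.
End Dist.

Local Open Scope ring_scope.
Local Open Scope ring_scope.

Section Trig.
Variable R : realType.

Lemma cosP r (x : R) : cos (x + pi *+ 2 *+ r) = cos x.
Proof.
elim: r => [|r IH]; first by rewrite mulr0n addr0.
by rewrite mulrSr addrA cosD2pi.
Qed.

Lemma sinP r (x : R) : sin (x + pi *+ 2 *+ r) = sin x.
Proof.
elim: r => [|r IH]; first by rewrite mulr0n addr0.
by rewrite mulrSr addrA sinD2pi.
Qed.

Lemma cosP' r (x : R) : cos (x - pi *+ 2 *+ r) = cos x.
Proof. by rewrite -(cosP r (x - _)) subrK. Qed.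
Lemma sinP' r (x : R) : sin (x - pi *+ 2 *+ r) = sin x.
Proof. by rewrite -(sinP r (x - _)) subrK. Qed.

Lemma cos_pir r : cos (pi *+ r) = (-1) ^+ r :> R.
Proof. by rewrite -[pi *+ r]add0r (alternatingn (@cosDpi R)) cos0 mulr1. Qed.

Lemma P2 r : pi *+ 2 *+ r = pi * (2 * r)%:R :> R.
Proof. by rewrite -mulrnA mulr_natr. Qed.

Lemma sin_frac_gt0 (d M : nat) : (0 < d < M)%N -> 0 < sin (pi * d%:R / M%:R) :> R.
Proof.
move=> /andP[d0 dM]; apply: sin_gt0_pi.
have M0 : 0 < M%:R :> R by rewrite ltr0n; lia.
have d0' : 0 < d%:R :> R by rewrite ltr0n.
have pi0 := @pi_gt0 R.
apply/andP; split; first by apply: divr_gt0 => //; apply: mulr_gt0.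
rewrite ltr_pdivrMr // ltr_pM2l // ltr_nat //.
Qed.
End Trig.

Section Circ.
Variables (R : realType) (m : nat).
Hypothesis hm : (0 < m)%N.
Local Notation N := (2 * m)%N.

Let N0 : (0 < N)%N. Proof. lia. Qed.
Let m0 : m%:R != 0 :> R. Proof. by rewrite pnatr_eq0 -lt0n. Qed.

Ltac fld := field; rewrite ?m0 ?pnatr_eq0 ?oner_eq0 ?andbT //=; try lia.

Definition ang (r j : nat) : R := pi * r%:R * j%:R / m%:R.
Definition lam (g : nat -> R) r := \sum_(k < N) g (cd N k 0) * cos (ang r k).

Lemma angN r : ang r N = pi *+ 2 *+ r.
Proof. rewrite P2 /ang !natrM; fld. Qed.
Lemma angD r a b : ang r (a + b) = ang r a + ang r b.
Proof. rewrite /ang natrD; fld. Qed.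
Lemma angB r a b : (b <= a)%N -> ang r (a - b) = ang r a - ang r b.
Proof. move=> ba; rewrite /ang natrB //; fld. Qed.
Lemma ang0 r : ang r 0 = 0.
Proof. by rewrite /ang mulr0 mul0r. Qed.

Lemma modD_case j k : (j < N)%N -> (k < N)%N ->
  ((j + k) %% N = if j + k < N then j + k else j + k - N)%N.
Proof.
move=> jN kN; case: ltnP => h; first by rewrite modn_small.
have -> : (j + k = (j + k - N) + N)%N by lia.
by rewrite modnDr modn_small //; lia.
Qed.

Lemma modN_case k : (k < N)%N -> ((N - k) %% N = if k == 0 then 0 else N - k)%N.
Proof.
move=> kN; case: eqP => [->|h]; first by rewrite subn0 modnn.
by rewrite modn_small //; lia.
Qed.

Definition addk (j k : 'I_N) : 'I_N := Ordinal (@ltn_pmod (j + k) N N0).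
Definition negk (k : 'I_N) : 'I_N := Ordinal (@ltn_pmod (N - k) N N0).

Lemma addk_inj j : injective (addk j).
Proof.
move=> a b /(congr1 val) /= /eqP; rewrite eqn_modDl !modn_small // => /eqP.
exact: val_inj.
Qed.

Lemma negk_inj : injective negk.
Proof.
move=> [a aN] [b bN] /(congr1 val) /=; rewrite !modN_case // => h.
apply: val_inj => /=; move: h; case: eqP => ?; case: eqP => ?; lia.
Qed.

Lemma sin_sum0 g r : \sum_(k < N) g (cd N k 0) * sin (ang r k) = 0.
Proof.
set S := LHS.
suff : S = - S by lra.
rewrite {1}/S (reindex_inj negk_inj) -sumrN; apply: eq_bigr => k _.
rewrite /negk /= modN_case //; case: eqP => [k0|k0].
  by rewrite k0 ang0 sin0 !mulr0 oppr0.
have -> : cd N (N - k) 0 = cd N k 0 by rewrite /cd; lia.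
rewrite angB ?angN; last by apply: ltnW.
by rewrite addrC sinP sinN mulrN.
Qed.

Lemma circ_cos g r phi (j : 'I_N) :
  \sum_(j' < N) g (cd N j' j) * cos (ang r j' + phi) = lam g r * cos (ang r j + phi).
Proof.
rewrite (reindex_inj (@addk_inj j)).
transitivity (\sum_(k < N) g (cd N k 0) * (cos (ang r j + phi) * cos (ang r k)
                - sin (ang r j + phi) * sin (ang r k))).
  apply: eq_bigr => k _; rewrite /addk /= modD_case //.
  have jN := ltn_ord j; have kN := ltn_ord k.
  case: ltnP => h.
    have -> : cd N (j + k) j = cd N k 0 by rewrite /cd; lia.
    by rewrite angD -cosD addrAC.
  have -> : cd N (j + k - N) j = cd N k 0 by rewrite /cd; lia.
  rewrite angB ?angN; last by lia.
  by rewrite angD addrAC cosP' -cosD addrAC.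
rewrite /lam (eq_bigr (fun k : 'I_N => cos (ang r j + phi) * (g (cd N k 0) * cos (ang r k))
   - sin (ang r j + phi) * (g (cd N k 0) * sin (ang r k)))); last first.
  by move=> k _; ring.
by rewrite sumrB -!mulr_sumr sin_sum0 mulr0 subr0 mulrC.
Qed.

Lemma circ_cos0 g r (j : 'I_N) :
  \sum_(j' < N) g (cd N j' j) * cos (ang r j') = lam g r * cos (ang r j).
Proof.
have := circ_cos g r 0 j; rewrite addr0.
by under eq_bigr do rewrite addr0.
Qed.

Lemma ortho_lt (a b : 'I_N) : (b < a)%N -> \sum_(r < N) cos (ang r a - ang r b) = 0.
Proof.
move=> ba.
set t : R := pi * (a - b)%N%:R / m%:R.
have ht : forall r : nat, ang r a - ang r b = r%:R * t.
  by move=> r; rewrite -angB ?(ltnW ba) // /ang /t; fld.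
under eq_bigr do rewrite ht.
have s0 : 0 < sin (t / 2).
  have -> : t / 2 = pi * (a - b)%N%:R / N%:R by rewrite /t natrM; fld.
  apply: sin_frac_gt0; have := ltn_ord a; lia.
have : 2 * sin (t / 2) * \sum_(r < N) cos (r%:R * t) = 0.
  rewrite mulr_sumr -(big_mkord xpredT (fun r => 2 * sin (t / 2) * cos (r%:R * t))).
  rewrite (telescope_sumr_eq (fun r : nat => sin (r%:R * t - t / 2))) //.
    have -> : N%:R * t = pi *+ 2 *+ (a - b)%N.
      by rewrite P2 /t !natrM; fld.
    by rewrite mul0r sub0r [pi *+ 2 *+ _ - _]addrC sinP subrr.
  move=> k _.
  rewrite (_ : k.+1%:R * t - t / 2 = k%:R * t + t / 2); last by rewrite -natr1; fld.
  rewrite sinD sinB; ring.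
move/eqP; rewrite !mulf_eq0 pnatr_eq0 /= (negbTE (lt0r_neq0 s0)) /= => /eqP //.
Qed.

Lemma ortho (l j : 'I_N) :
  \sum_(r < N) cos (ang r l - ang r j) = if l == j then N%:R else 0.
Proof.
case: eqP => [->|ne].
  by under eq_bigr do rewrite subrr cos0; rewrite sumr_const card_ord.
case: (ltngtP l j) => h.
- by under eq_bigr do rewrite -cosN opprB; apply: ortho_lt.
- exact: ortho_lt.
- by exfalso; apply: ne; apply: val_inj.
Qed.

Lemma circ_spec g (a : R) :
  (exists x : 'I_N -> R, (exists j : 'I_N, x j != 0) /\
     forall j : 'I_N, \sum_(j' < N) g (cd N j' j) * x j' = a * x j)
  <-> exists2 r, (r < N)%N & a = lam g r.
Proof.
split; last first.
  case=> r rN ->; exists (fun j => cos (ang r j)); split.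
    by exists (Ordinal N0); rewrite /= ang0 cos0 oner_neq0.
  exact: circ_cos0.
case=> x [[j0 xj0] Hx].
have [//|H] := pselect (exists2 r, (r < N)%N & a = lam g r).
exfalso.
have hX : forall (r : 'I_N) phi, \sum_(j < N) x j * cos (ang r j + phi) = 0.
  move=> r phi.
  have E : a * \sum_(j < N) x j * cos (ang r j + phi) =
           lam g r * \sum_(j < N) x j * cos (ang r j + phi).
    rewrite !mulr_sumr.
    transitivity (\sum_(j < N) (\sum_(j' < N) g (cd N j' j) * x j') * cos (ang r j + phi)).
      by apply: eq_bigr => j _; rewrite Hx mulrA.
    under eq_bigr do rewrite mulr_suml.
    rewrite exchange_big /=; apply: eq_bigr => j' _.
    rewrite mulrCA -(circ_cos g r phi j') mulr_sumr; apply: eq_bigr => j _.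
    rewrite cd_sym; [ring | lia | by rewrite oddM].
  have ne : a - lam g r != 0.
    by rewrite subr_eq0; apply/eqP => e; apply: H; exists r.
  by move/eqP: E; rewrite -subr_eq0 -mulrBl mulf_eq0 (negbTE ne) => /eqP.
have : N%:R * x j0 = 0.
  transitivity (\sum_(l < N) x l * (if l == j0 then N%:R else 0)).
    rewrite (bigD1 j0) //= eqxx big1 ?addr0; first by rewrite mulrC.
    by move=> l /negbTE ->; rewrite mulr0.
  transitivity (\sum_(r < N) ((\sum_(l < N) x l * cos (ang r l + 0)) * cos (ang r j0)
       + (\sum_(l < N) x l * cos (ang r l + - (pi / 2))) * sin (ang r j0))).
    under eq_bigr do rewrite -ortho mulr_sumr.
    rewrite exchange_big /=; apply: eq_bigr => r _.
    rewrite !mulr_suml -big_split /=; apply: eq_bigr => l _.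
    by rewrite addr0 cosBpihalf cosB; ring.
  by rewrite big1 // => r _; rewrite !hX !mul0r addr0.
by move/eqP; rewrite mulf_eq0 pnatr_eq0 (negbTE xj0) orbF; lia.
Qed.
End Circ.
Local Open Scope ring_scope.

Ltac revn := repeat match goal with H : @eq nat _ _ |- _ => move: H | H : ~ @eq nat _ _ |- _ => move: H end.
Ltac ifs_close := ifs; try lra; try (exfalso; revn; rewrite /cd; lia).

Section Lam.
Variables (R : realType) (m : nat).
Hypothesis hm : (2 <= m)%N.
Local Notation N := (2 * m)%N.
Let hm0 : (0 < m)%N. Proof. lia. Qed.
Let N0 : (0 < N)%N. Proof. lia. Qed.
Let m0 : m%:R != 0 :> R. Proof. by rewrite pnatr_eq0; lia. Qed.
Local Notation ang := (@ang R m).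
Local Notation lam := (@lam R m).

Definition gA (d : nat) : R := if d == 0%N then 2 else d%:R.
Definition gB (d : nat) : R := if d == 0%N then -2 else if d == 1%N then 2 else 0.
Definition Delta r := lam (fun d => d%:R) r.

Lemma lam_lin c g1 g2 r : lam (fun d => c * g1 d + g2 d) r = c * lam g1 r + lam g2 r.
Proof. by rewrite /lam mulr_sumr -big_split; apply: eq_bigr => k _ /=; ring. Qed.

Lemma sum_ind (F : nat -> R) c : (c < N)%N ->
  \sum_(k < N) (if (k : nat) == c then F k else 0) = F c.
Proof.
move=> cN; rewrite (bigD1 (Ordinal cN)) //= eqxx big1 ?addr0 // => k.
move=> ne; case: eqP => // e; exfalso; move/eqP: ne; apply; exact: val_inj.
Qed.

Lemma cosN1 r : cos (ang r (N - 1)) = cos (ang r 1).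
Proof.
rewrite angB ?angN //.
by rewrite [_ - _]addrC cosP cosN.
Qed.

Lemma lamB r : lam gB r = 4 * cos (ang r 1) - 2.
Proof.
rewrite /lam.
transitivity (\sum_(k < N) ((if (k : nat) == 0%N then -2 * cos (ang r k) else 0)
   + (if (k : nat) == 1%N then 2 * cos (ang r k) else 0)
   + (if (k : nat) == (N - 1)%N then 2 * cos (ang r k) else 0))).
  apply: eq_bigr => k _; have kN := ltn_ord k; rewrite /gB.
  ifs_close.
rewrite !big_split /= (sum_ind (fun k => -2 * cos (ang r k))) //.
rewrite !(sum_ind (fun k => 2 * cos (ang r k))); try lia.
rewrite cosN1 ang0 cos0; lra.
Qed.

Lemma lamA r : lam gA r = 2 + Delta r.
Proof.
rewrite /Delta /lam.
transitivity (\sum_(k < N) ((if (k : nat) == 0%N then 2 * cos (ang r k) else 0)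
   + (cd N k 0)%:R * cos (ang r k))).
  apply: eq_bigr => k _; have kN := ltn_ord k; rewrite /gA.
  case: eqP => [c0|c0]; case: eqP => [k0|k0].
  - by rewrite c0 mul0r addr0.
  - by exfalso; move: c0 k0; rewrite /cd; lia.
  - by exfalso; move: c0 k0; rewrite /cd; lia.
  - lra.
rewrite big_split /= (sum_ind (fun k => 2 * cos (ang r k))) // ang0 cos0; lra.
Qed.

Lemma Delta0 : Delta 0 = (m * m)%:R.
Proof.
rewrite /Delta /lam.
under eq_bigr do rewrite /ang mulr0 mul0r mul0r cos0 mulr1.
rewrite -natr_sum; congr (_%:R).
rewrite -(big_mkord xpredT (fun k => cd N k 0)).
rewrite (big_cat_nat (n := m)) /=; [|lia|lia].
have := big_addn 0 N m xpredT (fun k => cd N k 0); rewrite add0n => ->.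
rewrite (_ : (N - m = m)%N); last by lia.
rewrite -big_split /=.
rewrite (eq_big_nat _ _ (F2 := fun=> m)); first by rewrite sum_nat_const_nat; lia.
by move=> k km; rewrite /cd; lia.
Qed.

Lemma second_diff (j : nat) : (j < N)%N ->
  (cd N j 1)%:R + (cd N j (N - 1))%:R - 2 * (cd N j 0)%:R
  = (if j == 0%N then 2 else 0) - (if j == m then 2 else 0) :> R.
Proof.
move=> jN.
have h : (cd N j 1 + cd N j (N - 1) + (if j == m then 2 else 0) =
          2 * cd N j 0 + (if j == 0 then 2 else 0))%N.
  by rewrite /cd; ifs; lia.
move: (congr1 (fun z : nat => z%:R : R) h); rewrite !natrD.
case: eqP => _; case: eqP => _ /=; lra.
Qed.

Lemma Delta_rel r : (2 * cos (ang r 1) - 2) * Delta r = 2 - 2 * (-1) ^+ r.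
Proof.
have N1 : (1 < N)%N by lia.
have NN : (N - 1 < N)%N by lia.
have E0 := circ_cos0 hm0 (fun d => (d%:R : R)) r (Ordinal N0).
have E1 := circ_cos0 hm0 (fun d => (d%:R : R)) r (Ordinal N1).
have E2 := circ_cos0 hm0 (fun d => (d%:R : R)) r (Ordinal NN).
rewrite /= in E0 E1 E2.
have : Delta r * cos (ang r 1) + Delta r * cos (ang r (N - 1)) - 2 * (Delta r * cos (ang r 0))
   = 2 - 2 * cos (ang r m).
  rewrite /Delta -E0 -E1 -E2 mulr_sumr -big_split -sumrB /=.
  transitivity (\sum_(k < N) ((if (k : nat) == 0%N then 2 * cos (ang r k) else 0)
     - (if (k : nat) == m then 2 * cos (ang r k) else 0))).
    apply: eq_bigr => k _; have := second_diff (ltn_ord k).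
    move=> h; rewrite -[in RHS](mul0r (cos (ang r k))) -!(fun_if (fun z => z * cos (ang r k))).
    rewrite -mulrBl -h; ring.
  rewrite sumrB !(sum_ind (fun k => 2 * cos (ang r k))) //; last by lia.
  by rewrite ang0 cos0 mulr1.
have -> : ang r m = pi *+ r by rewrite /ang -mulr_natr; field.
rewrite cos_pir cosN1 ang0 cos0 => <-; ring.
Qed.

Lemma sin_half r : (0 < r < N)%N -> 0 < sin (ang r 1 / 2).
Proof.
move=> hr; have -> : ang r 1 / 2 = pi * r%:R / N%:R by rewrite /ang natrM; field.
exact: sin_frac_gt0.
Qed.

Lemma cos_half r : cos (ang r 1) = 1 - 2 * sin (ang r 1 / 2) ^+ 2.
Proof.
rewrite [in LHS](_ : ang r 1 = (ang r 1 / 2) *+ 2); last by rewrite -mulr_natr; field.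
rewrite cos_mulr2n cos2sin2; ring.
Qed.

Lemma Delta_even r : (0 < r < N)%N -> ~~ odd r -> Delta r = 0.
Proof.
move=> hr ev; have := Delta_rel r; rewrite -signr_odd (negbTE ev) expr0 cos_half.
have s0 := sin_half hr.
have s2 : 0 < sin (ang r 1 / 2) ^+ 2 by rewrite exprn_gt0.
set s := sin _ ^+ 2 in s2 *.
move=> h.
have : s * Delta r = 0 by lra.
by move/eqP; rewrite mulf_eq0 (negbTE (lt0r_neq0 s2)) => /eqP.
Qed.

Lemma Delta_odd r : (r < N)%N -> odd r -> Delta r = - (sin (ang r 1 / 2) ^+ 2)^-1.
Proof.
move=> hr od; have := Delta_rel r; rewrite -signr_odd od expr1 cos_half.
have s0 : 0 < sin (ang r 1 / 2).
  by apply: sin_half; move: od; case: r hr => //= *; lia.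
have s2 : 0 < sin (ang r 1 / 2) ^+ 2 by rewrite exprn_gt0.
set s := sin _ ^+ 2 in s2 *.
move=> h.
have sn : s != 0 by rewrite lt0r_neq0.
apply: (mulfI sn); rewrite mulrN mulfV //; lra.
Qed.

End Lam.
Local Open Scope ring_scope.

Section Main.
Variables (R : realType) (n m : nat).
Hypothesis hn : (3 <= n)%N.
Hypothesis hm : (2 <= m)%N.
Local Notation N := (2 * m)%N.
Local Notation G := (kron_graph (complete_graph n) (cycle_graph N)).
Let hm0 : (0 < m)%N. Proof. lia. Qed.
Let N2 : (2 <= N)%N. Proof. lia. Qed.
Let Nev : ~~ odd N. Proof. by rewrite oddM. Qed.

Local Notation gA := (@gA R).
Local Notation gB := (@gB R).

Lemma dd_split (s t : 'I_n * 'I_N) :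
  (ddist s t)%:R = gA (cd N s.2 t.2) + (if s.1 == t.1 then gB (cd N s.2 t.2) else 0) :> R.
Proof.
rewrite /ddist /gA /gB; move: (cd N s.2 t.2) => c.
case: (s.1 == t.1); case: (c =P 0%N) => [c0|c0] /=; try lra.
by case: (c =P 1%N) => [c1|c1] /=; rewrite ?c1; lra.
Qed.

Lemma sum_decomp (F : 'I_n * 'I_N -> R) i j :
  \sum_s F s * (ddist s (i, j))%:R =
  \sum_(j' < N) gA (cd N j' j) * (\sum_(i' < n) F (i', j'))
  + \sum_(j' < N) gB (cd N j' j) * F (i, j').
Proof.
under eq_bigr do rewrite dd_split.
rewrite (eq_bigr (fun s => F (s.1, s.2) * (gA (cd N s.2 j) +
           (if s.1 == i then gB (cd N s.2 j) else 0)))); last by case.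
rewrite -(pair_bigA _ (fun i' j' => F (i', j') * (gA (cd N j' j) +
           (if i' == i then gB (cd N j' j) else 0)))) /=.
transitivity (\sum_(i' < n) \sum_(j' < N) F (i', j') * gA (cd N j' j) +
  \sum_(i' < n) \sum_(j' < N) F (i', j') * (if i' == i then gB (cd N j' j) else 0)).
  rewrite -big_split; apply: eq_bigr => i' _; rewrite -big_split.
  by apply: eq_bigr => j' _; rewrite mulrDr.
congr (_ + _).
  rewrite exchange_big /=; apply: eq_bigr => j' _; rewrite mulr_sumr.
  by apply: eq_bigr => i' _; rewrite mulrC.
rewrite (bigD1 i) //= [X in _ + X]big1 ?addr0.
  by apply: eq_bigr => j' _; rewrite eqxx mulrC.
move=> i' /negbTE ->; apply: big1 => j' _; exact: mulr0.
Qed.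

Lemma sum_ind_ord (I : finType) (i0 : I) (c : R) :
  \sum_(i : I) (if i == i0 then c else 0) = c.
Proof.
rewrite (bigD1 i0) //= eqxx big1 ?addr0 // => i /negbTE -> //.
Qed.

Definition EQ (f : 'I_n -> 'I_N -> R) (a : R) :=
  forall (i : 'I_n) (j : 'I_N), \sum_(j' < N) gA (cd N j' j) * (\sum_(i' < n) f i' j')
    + \sum_(j' < N) gB (cd N j' j) * f i j' = a * f i j.

Lemma eig_fun (a : R) :
  eigenvalue (dist_matrix R G) a <->
  exists f : 'I_n -> 'I_N -> R, (exists i j, f i j != 0) /\ EQ f a.
Proof.
split.
  case/eigenvalueP => v Hv vn0.
  exists (fun i j => v 0 (enum_rank (i, j))); split.
    case: (pselect (exists k, v 0 k != 0)) => [[k vk]|H].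
      exists (enum_val k).1, (enum_val k).2.
      by rewrite -surjective_pairing enum_valK.
    exfalso; move/eqP: vn0; apply; apply/rowP => k; rewrite mxE.
    by apply/eqP; apply/negPn/negP => h; apply: H; exists k.
  move=> i j; rewrite -(sum_decomp (fun s => v 0 (enum_rank s))).
  move/rowP: Hv => /(_ (enum_rank (i, j))); rewrite !mxE => <-.
  rewrite [RHS](reindex (@enum_rank _)) /=; last exact/onW_bij/enum_rank_bij.
  apply: eq_bigr => s _; rewrite mxE !enum_rankK gdist_kron //.
case=> f [[i0 [j0 fij]] Hf].
apply/eigenvalueP; exists (\row_k f (enum_val k).1 (enum_val k).2).
  apply/rowP => k; rewrite !mxE.
  have [[i j] ->] : exists t, k = enum_rank t by exists (enum_val k); rewrite enum_valK.
  rewrite enum_rankK /= -(Hf i j).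
  transitivity (\sum_s f s.1 s.2 * (ddist s (i, j))%:R); last first.
    exact: (sum_decomp (fun s => f s.1 s.2) i j).
  rewrite (reindex (@enum_rank _)) /=; last exact/onW_bij/enum_rank_bij.
  by apply: eq_bigr => s _; rewrite !mxE !enum_rankK gdist_kron.
apply/negP => /eqP /rowP /(_ (enum_rank (i0, j0))); rewrite !mxE enum_rankK /=.
by move/eqP: fij.
Qed.

Definition circ_eig (g : nat -> R) a := exists x : 'I_N -> R,
  (exists j : 'I_N, x j != 0) /\
  forall j : 'I_N, \sum_(j' < N) g (cd N j' j) * x j' = a * x j.

Lemma fun_circ a : (exists f : 'I_n -> 'I_N -> R, (exists i j, f i j != 0) /\ EQ f a) <->
  circ_eig (fun d => n%:R * gA d + gB d) a \/ circ_eig gB a.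
Proof.
have n0 : (0 < n)%N by lia.
have n1 : (1 < n)%N by lia.
split.
  case=> f [[i0 [j0 fij]] Hf].
  case: (pselect (exists j : 'I_N, \sum_(i < n) f i j != 0)) => [[j1 wj]|H].
    left; exists (fun j => \sum_(i < n) f i j); split; first by exists j1.
    move=> j.
    transitivity (\sum_(i < n) (\sum_(j' < N) gA (cd N j' j) * (\sum_(i' < n) f i' j')
        + \sum_(j' < N) gB (cd N j' j) * f i j')).
      rewrite big_split /= sumr_const card_ord.
      under eq_bigr do rewrite mulrDl.
      rewrite big_split /= -[(\sum_(j' < N) _) *+ n]mulr_natl mulr_sumr; congr (_ + _).
        by apply: eq_bigr => j' _; rewrite mulrA.
      rewrite exchange_big /=; apply: eq_bigr => j' _; exact: mulr_sumr.
    by rewrite mulr_sumr; apply: eq_bigr => i _; rewrite Hf.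
  have w0 : forall j : 'I_N, \sum_(i < n) f i j = 0.
    by move=> j; apply/eqP; apply/negPn/negP => h; apply: H; exists j.
  right; exists (f i0); split; first by exists j0.
  move=> j; rewrite -(Hf i0 j) [X in _ = X + _]big1 ?add0r // => j' _; by rewrite w0 mulr0.
case=> [[x [[j0 xj] Hx]]|[x [[j0 xj] Hx]]].
  exists (fun i j => x j); split; first by exists (Ordinal n0), j0.
  move=> i j; rewrite -Hx.
  under eq_bigr do rewrite sumr_const card_ord.
  rewrite -big_split; apply: eq_bigr => j' _ /=; rewrite -mulr_natl; ring.
pose i0 : 'I_n := Ordinal n0; pose i1 : 'I_n := Ordinal n1.
pose c i := (if i == i0 then 1 else 0) - (if i == i1 then 1 else 0) : R.
have c0 : \sum_(i < n) c i = 0.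
  by rewrite sumrB !sum_ind_ord subrr.
exists (fun i j => c i * x j); split.
  exists i0, j0; rewrite /c eqxx.
  have -> : (i0 == i1) = false by [].
  by rewrite subr0 mul1r.
move=> i j; rewrite big1 ?add0r; last first.
  by move=> j' _; rewrite -mulr_suml c0 mul0r mulr0.
transitivity (c i * \sum_(j' < N) gB (cd N j' j) * x j').
  by rewrite mulr_sumr; apply: eq_bigr => j' _; ring.
by rewrite Hx; ring.
Qed.

Lemma spec_iff (a : R) : eigenvalue (dist_matrix R G) a <->
  (exists2 r, (r < N)%N & a = lam m (fun d => n%:R * gA d + gB d) r) \/
  (exists2 r, (r < N)%N & a = lam m gB r).
Proof.
rewrite eig_fun fun_circ /circ_eig.
have h1 := circ_spec hm0 (fun d => n%:R * gA d + gB d) a.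
have h2 := circ_spec hm0 gB a.
tauto.
Qed.
End Main.

Unset Implicit Arguments.
Local Open Scope classical_set_scope.

Lemma lamN (R : realType) n m (hm : (2 <= m)%N) r :
  lam m (fun d => n%:R * gA R d + gB R d) r =
  n%:R * (2 + Delta R m r) + (4 * cos (pi * r%:R / m%:R) - 2).
Proof.
by rewrite lam_lin (lamA R hm) (lamB R hm) /ang mulr1.
Qed.

Theorem theorem4p1 (R : realType) (n m : nat) (hn : (3 <= n)%N) (hm : (2 <= m)%N) :
  [set a : R | eigenvalue
     (dist_matrix R (kron_graph (complete_graph n) (cycle_graph (2 * m)))) a]
  = [set a : R |
       a = 2 * (n%:R + 1) + n%:R * m%:R ^+ 2
    \/ (exists2 p : nat, (1 <= p <= m - 1)%N &
          a = 2 * (n%:R - 1) + 4 * cos ((2 * p)%:R * pi / m%:R))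
    \/ (exists2 q : nat, (1 <= q <= m)%N &
          a = 2 * (n%:R - 1) + 4 * cos ((2 * q - 1)%:R * pi / m%:R)
              - n%:R * (sin ((2 * q - 1)%:R * pi / (2 * m)%:R) ^+ 2)^-1)
    \/ (exists2 r : nat, (r <= 2 * m - 1)%N &
          a = 4 * cos (pi / m%:R * r%:R) - 2)].
Proof.
have m0 : m%:R != 0 :> R by rewrite pnatr_eq0; lia.
have hB : forall r, lam m (gB R) r = 4 * cos (pi / m%:R * r%:R) - 2.
  by move=> r; rewrite (lamB R hm) /ang mulr1 mulrAC.
have hh : forall r, ang R m r 1 / 2 = r%:R * pi / (2 * m)%:R.
  by move=> r; rewrite /ang natrM; field; rewrite m0.
have hc : forall r, r%:R * pi / m%:R = pi * r%:R / m%:R :> R.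
  by move=> r; rewrite (mulrC r%:R).
apply/seteqP; split => a /=.
  move/(spec_iff hn hm) => [[r rN ->]|[r rN ->]]; last first.
    by right; right; right; exists r; [lia | rewrite hB].
  rewrite lamN //.
  case: (r =P 0%N) => [->|r0].
    left; rewrite (Delta0 R hm) mulr0 mul0r cos0 natrM; ring.
  have := odd_double_half r; rewrite -muln2.
  case: (boolP (odd r)) => od /= hr.
    right; right; left; exists (r./2).+1; first by lia.
    rewrite (_ : (2 * (r./2).+1 - 1 = r)%N); last by lia.
    rewrite (Delta_odd R hm) ?hc -?hh //.
    ring.
  right; left; exists r./2; first by lia.
  rewrite (_ : (2 * r./2 = r)%N); last by lia.
  rewrite (Delta_even R hm) ?hc //; try lia.
  ring.
move=> H; apply/(spec_iff hn hm).
case: H => [->|[[p hp ->]|[[q hq ->]|[r hr ->]]]].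
- left; exists 0%N; first by lia.
  rewrite lamN // (Delta0 R hm) mulr0 mul0r cos0 natrM; ring.
- left; exists (2 * p)%N; first by lia.
  rewrite lamN // (Delta_even R hm) ?hc; [ring | lia | by rewrite oddM].
- left; exists (2 * q - 1)%N; first by lia.
  rewrite lamN // (Delta_odd R hm) ?hc -?hh; [ring | lia |].
  have -> : (2 * q - 1 = (q - 1) * 2 + 1)%N by lia.
  by rewrite oddD oddM andbF.
- right; exists r; first by lia.
  by rewrite hB.
Qed.
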